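(* Let $G=(V,E)$ be an unweighted graph with $n$ vertices, and let $e\in E$. Then $$ B_e^{2}\leq n. $$
   Context: $L=D-A$ is the Laplacian of the unweighted graph $G$, $L^{+}$ its Moore–Penrose pseudoinverse, $L^{2+}=(L^+)^2$, and $1_v$ the indicator vector of vertex $v$. The biharmonic distance is $B_{st}=\sqrt{(1_s-1_t)^{T}L^{2+}(1_s-1_t)}$, and $B_e:=B_{st}$ for an edge $e=\{s,t\}$. *)

(* Defs.v *)
From mathcomp Require Import all_boot all_order all_algebra.
Set Implicit Arguments. Unset Strict Implicit. Unset Printing Implicit Defensive.
Import Order.TTheory GRing.Theory Num.Theory.
Local Open Scope ring_scope.

Definition simple_graph (n : nat) (adj : rel 'I_n) : Prop :=
  (forall i j, adj i j = adj j i) /\ (forall i, adj i i = false).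

Definition degree (n : nat) (adj : rel 'I_n) (i : 'I_n) : nat :=
  #|[set j | adj i j]|.

Definition laplacian (R : ringType) (n : nat) (adj : rel 'I_n) : 'M[R]_n :=
  \matrix_(i, j) ((if i == j then (degree adj i)%:R else 0)
                  - (if adj i j then 1 else 0)).

(* X is the Moore–Penrose pseudoinverse of A (the four Penrose equations;
   over a real field the conjugate transpose is the transpose). *)
Definition is_MP_pinv (R : ringType) (n : nat) (A X : 'M[R]_n) : Prop :=
  [/\ A *m X *m A = A, X *m A *m X = X,
      (A *m X)^T = A *m X & (X *m A)^T = X *m A].

Definition ind (R : ringType) (n : nat) (v : 'I_n) : 'cV[R]_n :=
  \col_i (if i == v then 1 else 0).

Definition biharm_sq (R : ringType) (n : nat) (Lp : 'M[R]_n) (s t : 'I_n) : R :=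
  let b := ind R s - ind R t in
  ((b^T *m (Lp *m Lp) *m b) 0 0).

(* Main.v *)
Require Import Defs.
From mathcomp Require Import all_boot all_order all_algebra.
From mathcomp Require Import ring lra.
Import Order.TTheory GRing.Theory Num.Theory.
Set Implicit Arguments. Unset Strict Implicit. Unset Printing Implicit Defensive.
Local Open Scope ring_scope.

Lemma ifB (R : realFieldType) (b : bool) (x y : R) :
  (if b then x - y else 0) = (if b then x else 0) - (if b then y else 0).
Proof. by case: b; rewrite ?subr0. Qed.

Lemma lap_mul (R : realFieldType) n (adj : rel 'I_n) (z : 'cV[R]_n) i :
  (laplacian R adj *m z) i 0 = \sum_j (if adj i j then z i 0 - z j 0 else 0).
Proof.
rewrite mxE.
under eq_bigr do rewrite mxE mulrBl.
rewrite sumrB (bigD1 i) //= eqxx big1 ?addr0; last first.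
  by move=> j /negbTE; rewrite eq_sym => ->; rewrite mul0r.
under [X in _ - X = _]eq_bigr do rewrite (fun_if (fun x => x * z _ 0)) mul1r mul0r.
under [RHS]eq_bigr do rewrite ifB.
rewrite sumrB; congr (_ - _).
rewrite -big_mkcond /= sumr_const /degree.
rewrite -mulr_natl.
have -> : #|[set j | adj i j]| = #|adj i| by apply: eq_card => j; rewrite inE.
by rewrite mulr1 mulr_natl.
Qed.

Lemma lap_tr (R : realFieldType) n (adj : rel 'I_n) :
  simple_graph adj -> (laplacian R adj)^T = laplacian R adj.
Proof.
rewrite /simple_graph => -[sym _]; apply/matrixP => i j; rewrite !mxE eq_sym sym.
by case: eqP => [->|].
Qed.

Definition Qf (R : realFieldType) n (adj : rel 'I_n) (y z : 'cV[R]_n) :=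
  \sum_i \sum_j (if adj i j then (y i 0 - y j 0) * (z i 0 - z j 0) else 0).

Definition dot (R : realFieldType) n (y z : 'cV[R]_n) := (y^T *m z) 0 0.

Lemma dotE (R : realFieldType) n (y z : 'cV[R]_n) : dot y z = \sum_i y i 0 * z i 0.
Proof. by rewrite /dot mxE; apply: eq_bigr => i _; rewrite mxE. Qed.

Lemma Q_form (R : realFieldType) n (adj : rel 'I_n) (y z : 'cV[R]_n) :
  simple_graph adj -> dot y (laplacian R adj *m z) *+ 2 = Qf adj y z.
Proof.
rewrite /simple_graph => -[sym _].
have S1 : dot y (laplacian R adj *m z) =
   \sum_i \sum_j (if adj i j then y i 0 * (z i 0 - z j 0) else 0).
  rewrite dotE; apply: eq_bigr => i _; rewrite lap_mul mulr_sumr.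
  by apply: eq_bigr => j _; case: (adj i j); rewrite ?mulr0.
have S2 : dot y (laplacian R adj *m z) =
   \sum_i \sum_j (if adj i j then y j 0 * (z j 0 - z i 0) else 0).
  rewrite S1 exchange_big /=; apply: eq_bigr => i _; apply: eq_bigr => j _.
  by rewrite sym.
rewrite mulr2n {1}S1 S2 /Qf -big_split /=; apply: eq_bigr => i _.
rewrite -big_split /=; apply: eq_bigr => j _.
case: (adj i j); rewrite ?addr0 //; ring.
Qed.
Definition clip (R : realFieldType) (a c p : R) := if p < a then a else if c < p then c else p.

Lemma clip_in (R : realFieldType) (a c p : R) : a <= c -> a <= clip a c p <= c.
Proof. rewrite /clip => ac; case: ifP => h1; [|case: ifP => h2]; apply/andP; split; lra. Qed.

Lemma clip_pos (R : realFieldType) (a c p : R) : a <= c -> 0 < p - clip a c p -> c < p.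
Proof. rewrite /clip => ac; case: ifP => h1; [|case: ifP => h2]; lra. Qed.

Lemma clip_neg (R : realFieldType) (a c p : R) : a <= c -> p - clip a c p < 0 -> p < a.
Proof. rewrite /clip => ac; case: ifP => h1; [|case: ifP => h2]; lra. Qed.

Lemma clip_zero (R : realFieldType) (a c p : R) : a <= c -> p - clip a c p = 0 -> a <= p <= c.
Proof. rewrite /clip => ac; case: ifP => h1; [|case: ifP => h2]; move=> h; apply/andP; split; lra. Qed.

Lemma clip_id (R : realFieldType) (a c p : R) : a <= p <= c -> p - clip a c p = 0.
Proof. rewrite /clip => /andP[h h']; case: ifP => h1; [|case: ifP => h2]; lra. Qed.

Lemma clip_lip (R : realFieldType) (a c p q : R) : a <= c ->
  let u := p - clip a c p in let v := q - clip a c q in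
  (u - v) * (u - v) <= (u - v) * (p - q).
Proof.
rewrite /clip => ac /=.
case: ifP => h1; [|case: ifP => h2]; case: ifP => h3; try case: ifP => h4; nra.
Qed.
Lemma MP_unique (R : comNzRingType) n (A X Y : 'M[R]_n) :
  is_MP_pinv A X -> is_MP_pinv A Y -> X = Y.
Proof.
case=> [X1 X2 X3 X4] [Y1 Y2 Y3 Y4].
have h1 : A *m X = A *m X *m (A *m Y).
  transitivity ((A *m X)^T); first by rewrite X3.
  transitivity ((A *m Y *m (A *m X))^T).
    by rewrite mulmxA Y1.
  by rewrite trmx_mul X3 Y3.
have h2 : Y *m A = X *m A *m (Y *m A).
  transitivity ((Y *m A)^T); first by rewrite Y4.
  transitivity ((Y *m A *m (X *m A))^T).
    by rewrite -!mulmxA (mulmxA A X A) X1.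
  by rewrite trmx_mul X4 Y4.
have eX : X = X *m A *m Y.
  by rewrite -{1}X2 -mulmxA h1 !mulmxA X2.
have eY : Y = X *m A *m Y.
  by rewrite -{1}Y2 h2 -!mulmxA (mulmxA Y A Y) Y2.
by rewrite eY -eX.
Qed.

Lemma MP_sym (R : comNzRingType) n (A X : 'M[R]_n) :
  A^T = A -> is_MP_pinv A X -> X^T = X.
Proof.
move=> AT H; suff HT : is_MP_pinv A X^T by rewrite -(MP_unique H HT).
case: H => [X1 X2 X3 X4]; split.
- by apply: trmx_inj; rewrite !trmx_mul trmxK AT mulmxA X1.
- by apply: trmx_inj; rewrite !trmx_mul !trmxK AT mulmxA X2.
- by rewrite trmx_mul trmxK AT -X4 trmx_mul AT.
- by rewrite trmx_mul trmxK AT -X3 trmx_mul AT.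
Qed.

Lemma sum_ge1 (R : realFieldType) n (F : 'I_n -> R) i :
  (forall j, 0 <= F j) -> F i <= \sum_j F j.
Proof.
move=> h; rewrite (bigD1 i) //= ler_wpDr //; exact: sumr_ge0.
Qed.

Lemma sum_ge2 (R : realFieldType) n (F : 'I_n -> R) i j :
  i != j -> (forall k, 0 <= F k) -> F i + F j <= \sum_k F k.
Proof.
move=> ij h; rewrite (bigD1 i) //= lerD2l (bigD1 j) 1?eq_sym //= ler_wpDr //.
exact: sumr_ge0.
Qed.

Lemma Q_edges (R : realFieldType) n (adj : rel 'I_n) (w : 'cV[R]_n) :
  Qf adj w w <= 0 -> forall i j, adj i j -> w i 0 = w j 0.
Proof.
move=> hQ i j ij.
have h0 : forall i j, 0 <= (if adj i j then (w i 0 - w j 0) * (w i 0 - w j 0) else 0).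
  by move=> k l; case: (adj k l) => //; rewrite -expr2 sqr_ge0.
have h1 : forall i, 0 <= \sum_j (if adj i j then (w i 0 - w j 0) * (w i 0 - w j 0) else 0).
  by move=> k; apply: sumr_ge0.
have Q0 : Qf adj w w = 0 by apply/eqP; rewrite eq_le hQ; apply: sumr_ge0.
have := @psumr_eq0P _ _ _ _ (fun k _ => h1 k) Q0 i isT.
move/(@psumr_eq0P _ _ _ _ (fun k _ => h0 i k))=> /(_ j isT); rewrite ij.
by move/eqP; rewrite mulf_eq0 orbb subr_eq0 => /eqP.
Qed.

Lemma edges_ker (R : realFieldType) n (adj : rel 'I_n) (w : 'cV[R]_n) :
  (forall i j, adj i j -> w i 0 = w j 0) -> laplacian R adj *m w = 0.
Proof.
move=> h; apply/matrixP => i k; rewrite ord1 lap_mul mxE big1 // => j _.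
by case: ifP => // /h ->; rewrite subrr.
Qed.

Lemma dot_tr (R : realFieldType) n (A : 'M[R]_n) (y z : 'cV[R]_n) :
  dot y (A *m z) = dot (A^T *m y) z.
Proof. by rewrite /dot trmx_mul trmxK mulmxA. Qed.

Lemma dot0 (R : realFieldType) n (z : 'cV[R]_n) : dot 0 z = 0.
Proof. by rewrite dotE big1 // => i _; rewrite mxE mul0r. Qed.

Lemma ker_edges (R : realFieldType) n (adj : rel 'I_n) (w : 'cV[R]_n) :
  simple_graph adj -> laplacian R adj *m w = 0 -> forall i j, adj i j -> w i 0 = w j 0.
Proof.
move=> G h; apply: Q_edges; rewrite -Q_form // h.
by rewrite dotE big1 ?mul0rn // => i _; rewrite mxE mulr0.
Qed.

Lemma dotC (R : realFieldType) n (y z : 'cV[R]_n) : dot y z = dot z y.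
Proof. by rewrite !dotE; apply: eq_bigr => i _; rewrite mulrC. Qed.

Lemma dot_ind (R : realFieldType) n (w : 'cV[R]_n) s t :
  dot w (ind R s - ind R t) = w s 0 - w t 0.
Proof.
rewrite dotE.
under eq_bigr do rewrite !mxE mulrBr.
rewrite sumrB; congr (_ - _).
  rewrite (bigD1 s) //= eqxx mulr1 big1 ?addr0 // => i /negbTE ->; exact: mulr0.
rewrite (bigD1 t) //= eqxx mulr1 big1 ?addr0 // => i /negbTE ->; exact: mulr0.
Qed.

Lemma dotBr (R : realFieldType) n (y z1 z2 : 'cV[R]_n) :
  dot y (z1 - z2) = dot y z1 - dot y z2.
Proof.
rewrite !dotE -sumrB; apply: eq_bigr => i _; rewrite !mxE mulrBr //.
Qed.

Lemma dot_self0 (R : realFieldType) n (v : 'cV[R]_n) : dot v v = 0 -> v = 0.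
Proof.
rewrite dotE => h; apply/matrixP => i k; rewrite ord1 mxE.
have h0 : forall i, true -> 0 <= v i 0 * v i 0 by move=> j _; rewrite -expr2 sqr_ge0.
have := @psumr_eq0P _ _ _ _ h0 h i isT.
by move/eqP; rewrite mulf_eq0 orbb => /eqP.
Qed.

Lemma sum_le1 (R : realFieldType) n (F : 'I_n -> R) i :
  (forall j, F j <= 0) -> \sum_j F j <= F i.
Proof.
move=> h; have := @sum_ge1 _ _ (fun j => - F j) i.
rewrite sumrN lerN2; apply => j; rewrite oppr_ge0; exact: h.
Qed.

Theorem theoremA3 (R : realFieldType) (n : nat) (adj : rel 'I_n)
  (Lp : 'M[R]_n) (s t : 'I_n) :
  simple_graph adj ->
  is_MP_pinv (laplacian R adj) Lp ->
  adj s t ->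
  biharm_sq Lp s t <= n%:R.
Proof.
move=> G H st.
have LT := lap_tr R G.
have LpT := MP_sym LT H.
case: H => [P1 P2 P3 P4].
set L := laplacian R adj in LT P1 P2 P3 P4 LpT *.
have comm : Lp *m L = L *m Lp by rewrite -P3 trmx_mul LT LpT.
set b := ind R s - ind R t.
set x := Lp *m b.
have Lx : L *m x = b.
  set v := b - L *m x.
  have Lv : L *m v = 0.
    rewrite /v mulmxBr /x !mulmxA -(mulmxA L L Lp) -comm mulmxA P1 subrr //.
  have vst := ker_edges G Lv st.
  have dvv : dot v v = 0.
    rewrite {2}/v dotBr dot_ind vst subrr sub0r dot_tr LT Lv dot0 oppr0 //.
  have := dot_self0 dvv; rewrite /v => /subr0_eq; done.
have ker_perp : forall w, L *m w = 0 -> dot w x = 0.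
  move=> w Lw; have -> : x = Lp *m (L *m x) by rewrite Lx.
  rewrite mulmxA comm -mulmxA dot_tr LT Lw dot0 //.
have ts : t != s.
  by apply/eqP => ets; move: st; rewrite ets; case: G => _ ->.
have hR : 0 <= x s 0 - x t 0 <= 1.
  have Q2 := Q_form x x G; rewrite Lx dot_ind in Q2.
  pose F i := \sum_j (if adj i j then (x i 0 - x j 0) * (x i 0 - x j 0) else 0).
  have F0 : forall i, 0 <= F i.
    move=> i; apply: sumr_ge0 => j _; case: (adj i j) => //; rewrite -expr2 sqr_ge0 //.
  have := sum_ge2 ts F0; rewrite -/(Qf adj x x) -Q2.
  have Ft : (x t 0 - x s 0) * (x t 0 - x s 0) <= F t.
    have := @sum_ge1 _ _ (fun j => if adj t j then (x t 0 - x j 0) * (x t 0 - x j 0) else 0) s.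
    case: G => sym _; rewrite sym st; apply => j; case: (adj t j) => //; rewrite -expr2 sqr_ge0 //.
  have Fs : (x s 0 - x t 0) * (x s 0 - x t 0) <= F s.
    have := @sum_ge1 _ _ (fun j => if adj s j then (x s 0 - x j 0) * (x s 0 - x j 0) else 0) t.
    rewrite st; apply => j; case: (adj s j) => //; rewrite -expr2 sqr_ge0 //.
  move=> hh; rewrite mulr2n in hh; apply/andP; split; nra.
set a := x t 0; set c := x s 0.
have ac : a <= c by move: hR; rewrite /a /c; lra.
pose u : 'cV[R]_n := \col_v (x v 0 - clip a c (x v 0)).
have uE : forall v, u v 0 = x v 0 - clip a c (x v 0) by move=> v; rewrite mxE.
have us : u s 0 = 0 by rewrite uE clip_id // -/c; apply/andP; split; lra.
have ut : u t 0 = 0 by rewrite uE clip_id // -/a; apply/andP; split; lra.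
have Quu : Qf adj u u <= 0.
  have -> : 0 = Qf adj u x.
    by rewrite -Q_form // Lx dot_ind us ut subrr mul0rn.
  apply: ler_sum => i _; apply: ler_sum => j _; case: (adj i j) => //.
  rewrite !uE; exact: clip_lip.
have uedge := Q_edges Quu.
have sums : forall P : pred R, \sum_v (if P (u v 0) then x v 0 else 0) = 0.
  move=> P; pose w : 'cV[R]_n := \col_v (if P (u v 0) then 1 else 0).
  have Lw : L *m w = 0.
    apply: edges_ker => i j ij; rewrite [w i 0]mxE [w j 0]mxE (uedge i j ij) //.
  transitivity (dot w x); last exact: ker_perp.
  rewrite dotE; apply: eq_bigr => v _; rewrite [w v 0]mxE.
  by case: (P _); rewrite ?mul1r ?mul0r.
have a0 : a <= 0.
  rewrite leNgt; apply/negP => a0.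
  have := @sum_ge1 _ _ (fun v => if u v 0 == 0 then x v 0 else 0) t.
  rewrite (sums (fun r => r == 0)) ut eqxx -/a.
  move=> h; suff : a <= 0 by lra.
  apply: h => j; case: eqP => //; rewrite uE => /(clip_zero ac) /andP [h1 h2]; lra.
have c0 : 0 <= c.
  rewrite leNgt; apply/negP => c0.
  have := @sum_le1 _ _ (fun v => if u v 0 == 0 then x v 0 else 0) s.
  rewrite (sums (fun r => r == 0)) us eqxx -/c.
  move=> h; suff : 0 <= c by lra.
  apply: h => j; case: eqP => //; rewrite uE => /(clip_zero ac) /andP [h1 h2]; lra.
have xin : forall v, a <= x v 0 <= c.
  move=> v; apply: (clip_zero ac); rewrite -uE.
  case: (ltrgtP (u v 0) 0) => // hu.
  - have := @sum_le1 _ _ (fun v => if u v 0 < 0 then x v 0 else 0) v.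
    rewrite (sums (fun r => r < 0)) hu.
    move: hu; rewrite uE => /(clip_neg ac) hv.
    move=> h; suff : 0 <= x v 0 by lra.
    apply: h => j; case: ifP => //; rewrite uE => /(clip_neg ac); lra.
  - have := @sum_ge1 _ _ (fun v => if 0 < u v 0 then x v 0 else 0) v.
    rewrite (sums (fun r => 0 < r)) hu.
    move: hu; rewrite uE => /(clip_pos ac) hv.
    move=> h; suff : x v 0 <= 0 by lra.
    apply: h => j; case: ifP => //; rewrite uE => /(clip_pos ac); lra.
have xT : x^T = b^T *m Lp by rewrite trmx_mul LpT.
have -> : biharm_sq Lp s t = dot x x by rewrite /biharm_sq /dot xT !mulmxA.
rewrite dotE.
have -> : (n%:R : R) = \sum_(v < n) 1 by rewrite sumr_const card_ord.
apply: ler_sum => v _; have := xin v; move: hR; rewrite -/a -/c; move=> hR /andP [h1 h2].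
nra.
Qed.
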